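(* Let $\mathcal{D}$ be the set of partitions into distinct parts, $\mathcal{D}_o$ the set of partitions into an odd number of distinct parts, $\nu(\pi)$ the number of parts of $\pi$, and for $\pi=(\lambda_1,\lambda_2,\dots)$, $\mathcal{O}(\pi)=\lambda_1+\lambda_3+\lambda_5+\cdots$. Let $\tilde C_{\le -1}$ and $\tilde C_{=0}$ be the sets of partitions with crank $\le -1$ and crank $=0$ respectively. Then, as formal power series, \[\sum_{\pi\in\mathcal{D}_o}q^{\mathcal{O}(\pi)}=\sum_{\pi\in\tilde C_{\le-1}}q^{|\pi|}\quad\text{and}\quad\sum_{\pi\in\mathcal{D}}(-1)^{\nu(\pi)}q^{\mathcal{O}(\pi)}=-q+\sum_{\pi\in\tilde C_{=0}}q^{|\pi|}.\]
   Context: A partition is a finite weakly decreasing sequence of positive integers; $|\pi|$ is the sum of its parts; the empty partition has $0$ parts. The crank of a partition $\pi$ is defined as: the largest part of $\pi$ if $1$ is not a part of $\pi$ (the empty partition has crank $0$); otherwise, (the number of parts of $\pi$ larger than the number of $1$'s in $\pi$) minus (the number of $1$'s in $\pi$). *)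

(* Defs.v *)
From mathcomp Require Import all_boot all_order all_algebra.
Set Implicit Arguments. Unset Strict Implicit. Unset Printing Implicit Defensive.
Import Order.TTheory GRing.Theory Num.Theory.

Definition is_partition (s : seq nat) : bool :=
  sorted geq s && all (fun x => 0 < x) s.

Definition is_distinct_partition (s : seq nat) : bool :=
  sorted gtn s && all (fun x => 0 < x) s.

Definition nparts (s : seq nat) : nat := size s.

Fixpoint oddsum (s : seq nat) : nat :=
  match s with
  | x :: _ :: t => x + oddsum t
  | [:: x] => x
  | [::] => 0
  end.

Definition omega (s : seq nat) : nat := count (pred1 1) s.

Definition largest (s : seq nat) : nat := foldr maxn 0 s.

Local Open Scope ring_scope.
Definition crank (s : seq nat) : int :=
  if omega s == 0%N then (largest s)%:Z
  else (count (fun x => (omega s < x)%N) s)%:Z - (omega s)%:Z.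
Local Close Scope ring_scope.

Fixpoint seqs_len (k b : nat) : seq (seq nat) :=
  if k is k'.+1 then [seq x :: t | x <- iota 0 b.+1, t <- seqs_len k' b]
  else [:: [::]].

(* all sequences of length <= b with entries in {0,...,b} (without repetition);
   every partition of n, and every distinct partition pi with O(pi) = n,
   belongs to bseqs n. *)
Definition bseqs (b : nat) : seq (seq nat) :=
  flatten [seq seqs_len k b | k <- iota 0 b.+1].

Definition coeff_Do_O (n : nat) : nat :=
  count (fun s => is_distinct_partition s && odd (nparts s) && (oddsum s == n))
        (bseqs n).

Definition coeff_crank_le_m1 (n : nat) : nat :=
  count (fun s => is_partition s && (sumn s == n) && (crank s <= -1)%R)
        (bseqs n).

Definition coeff_D_signed_O (n : nat) : int :=
  \sum_(s <- bseqs n | is_distinct_partition s && (oddsum s == n))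
     ((-1) ^+ nparts s)%R.

Definition coeff_crank_eq0 (n : nat) : nat :=
  count (fun s => is_partition s && (sumn s == n) && (crank s == 0%R))
        (bseqs n).

(* Main.v *)
Require Import Defs.
From mathcomp Require Import all_boot all_order all_algebra.
Import GRing.Theory Num.Theory.
From mathcomp Require Import zify.
Set Implicit Arguments. Unset Strict Implicit. Unset Printing Implicit Defensive.

Lemma seqs_lenS k b : seqs_len k.+1 b = [seq x :: t | x <- iota 0 b.+1, t <- seqs_len k b].
Proof. by []. Qed.

Lemma mem_seqs_len k b s : (s \in seqs_len k b) = (size s == k) && all (fun x => x <= b) s.
Proof.
elim: k s => [|k IH] s.
  by case: s.
rewrite seqs_lenS; apply/allpairsP/idP.
  case=> [[x t]] [Hx Ht ->]; rewrite IH in Ht; rewrite mem_iota in Hx.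
  case/andP: Ht => /eqP Hs Ht; apply/andP; split; first by rewrite /= Hs.
  apply/andP; split; [move: Hx; rewrite add0n ltnS; by case/andP | exact Ht].
case: s => [|x t] // /andP [Hs /andP [Hx Ht]].
exists (x, t); split; first by rewrite mem_iota; simpl; lia.
  by rewrite IH; apply/andP; split.
done.
Qed.

Lemma uniq_seqs_len k b : uniq (seqs_len k b).
Proof.
elim: k => [|k IH] //.
rewrite seqs_lenS; apply: allpairs_uniq => //; first exact: iota_uniq.
by move=> [x1 t1] [x2 t2] _ _ /= [-> ->].
Qed.

Lemma mem_bseqs b s : (s \in bseqs b) = (size s <= b) && all (fun x => x <= b) s.
Proof.
rewrite /bseqs; apply/flattenP/idP.
  case=> t /mapP [k Hk ->]; rewrite mem_seqs_len => /andP [/eqP Hs ->].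
  by rewrite mem_iota in Hk; rewrite andbT; lia.
move=> /andP [Hs Ha]; exists (seqs_len (size s) b).
  by apply/mapP; exists (size s) => //; rewrite mem_iota; lia.
by rewrite mem_seqs_len eqxx.
Qed.

Lemma uniq_bseqs_aux b k a : uniq (flatten [seq seqs_len j b | j <- iota a k]).
Proof.
elim: k a => [|k IH] a //=.
rewrite cat_uniq uniq_seqs_len IH andbT /=.
apply/hasPn => s /flattenP [t /mapP [j Hj ->]].
rewrite !mem_seqs_len mem_iota in Hj *.
case/andP => /eqP -> _; apply/negP => /andP [/eqP H _]; lia.
Qed.

Lemma uniq_bseqs b : uniq (bseqs b).
Proof. exact: uniq_bseqs_aux. Qed.

Lemma count_bij (T1 T2 : eqType) (L1 : seq T1) (L2 : seq T2) (P : pred T1) (Q : pred T2)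
  (f : T1 -> T2) (g : T2 -> T1) :
  uniq L1 -> uniq L2 -> (forall x, P x -> x \in L1) -> (forall y, Q y -> y \in L2) ->
  (forall x, P x -> Q (f x)) -> (forall y, Q y -> P (g y)) ->
  (forall x, P x -> g (f x) = x) -> (forall y, Q y -> f (g y) = y) ->
  count P L1 = count Q L2.
Proof.
move=> U1 U2 M1 M2 PQ QP gf fg.
rewrite -!size_filter.
have Hp : perm_eq (map f (filter P L1)) (filter Q L2).
  apply: uniq_perm.
  - rewrite map_inj_in_uniq ?filter_uniq //.
    move=> x y; rewrite !mem_filter => /andP [Px _] /andP [Py _] E.
    by rewrite -(gf _ Px) -(gf _ Py) E.
  - exact: filter_uniq.
  move=> y; apply/mapP/idP.
    by case=> x; rewrite mem_filter => /andP [Px _] ->; rewrite mem_filter PQ // M2 // PQ.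
  rewrite mem_filter => /andP [Qy _]; exists (g y); last by rewrite fg.
  by rewrite mem_filter QP // M1 // QP.
by rewrite -(perm_size Hp) size_map.
Qed.

Lemma geq_trans' : transitive geq.
Proof. by move=> a b c /= H1 H2; apply: leq_trans H2 H1. Qed.

Lemma sgeq_cons a l : sorted geq (a :: l) = all (fun x => x <= a) l && sorted geq l.
Proof. by rewrite /= path_sortedE //; exact: geq_trans'. Qed.

Lemma sgeq_head l : sorted geq l -> all (fun x => x <= head 0 l) l.
Proof.
case: l => [|a l] //; rewrite sgeq_cons => /andP [H _] /=.
by rewrite leqnn.
Qed.

Lemma sgeq_mapS l : sorted geq (map S l) = sorted geq l.
Proof. by rewrite sorted_map. Qed.

Lemma sgeq_cat0 l y : sorted geq l -> sorted geq (l ++ nseq y 0).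
Proof.
move=> H; rewrite sorted_pairwise; last exact: geq_trans'.
rewrite pairwise_cat -sorted_pairwise; last exact: geq_trans'.
rewrite H -sorted_pairwise; last exact: geq_trans'.
apply/and3P; split => //; last by elim: y => // [[|y]].
by apply/allrelP => x w _ /nseqP [-> _].
Qed.

Lemma sgeq_nseq0 z : sorted geq (nseq z 0).
Proof. by elim: z => // [[|z]]. Qed.

Fixpoint fromC (p : seq (nat * nat)) (z : nat) : seq nat :=
  match p with
  | [::] => nseq z 0
  | (d, y) :: p' => let r := fromC p' z in (d + 1 + head 0 r) :: map S r ++ nseq y 0
  end.

Lemma fromC_cons d y p z : fromC ((d, y) :: p) z =
  (d + 1 + head 0 (fromC p z)) :: map S (fromC p z) ++ nseq y 0.
Proof. by []. Qed.

Definition sumx (p : seq (nat*nat)) := sumn (map fst p).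
Definition sumy (p : seq (nat*nat)) := sumn (map snd p).

Lemma sumx_nil : sumx [::] = 0. Proof. by []. Qed.
Lemma sumy_nil : sumy [::] = 0. Proof. by []. Qed.
Lemma sumx_cons d y p : sumx ((d, y) :: p) = d + sumx p. Proof. by []. Qed.
Lemma sumy_cons d y p : sumy ((d, y) :: p) = y + sumy p. Proof. by []. Qed.

Lemma sorted_fromC p z : sorted geq (fromC p z).
Proof.
elim: p => [|[d y] p IH]; first exact: sgeq_nseq0.
rewrite fromC_cons sgeq_cons sgeq_cat0 ?sgeq_mapS // andbT all_cat.
apply/andP; split; last by apply/allP => x /nseqP [-> _].
apply/allP => x /mapP [u Hu ->]; move/allP: (sgeq_head IH) => /(_ u Hu); lia.
Qed.

Lemma head_fromC p z : head 0 (fromC p z) = sumx p + size p.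
Proof. elim: p => [|[d y] p IH]; first by case: z. rewrite fromC_cons /= IH sumx_cons; lia. Qed.

Lemma size_fromC p z : size (fromC p z) = z + sumy p + size p.
Proof.
elim: p => [|[d y] p IH]; first by rewrite /= size_nseq sumy_nil; lia.
rewrite fromC_cons /= size_cat size_map size_nseq IH sumy_cons; lia.
Qed.

Lemma sumn_mapS l : sumn (map S l) = sumn l + size l.
Proof. elim: l => //= a l ->; lia. Qed.

Lemma sumn_nseq0 y : sumn (nseq y 0) = 0.
Proof. by elim: y. Qed.

Lemma count0_fromC p z : count (pred1 0) (fromC p z) =
  (if p is (d, y) :: _ then y else z).
Proof.
case: p => [|[d y] p]; first by rewrite /= count_nseq /= mul1n.
rewrite fromC_cons /= count_cat count_nseq /= mul1n.
have -> : count (pred1 0) (map S (fromC p z)) = 0.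
  by rewrite count_map; apply/eqP; rewrite -leqn0 leqNgt -has_count; apply/hasP => [[x]].
have -> : (d + 1 + head 0 (fromC p z) == 0) = false by lia.
done.
Qed.

Definition peel (L : seq nat) := map predn (filter (fun x => 0 < x) (behead L)).

Fixpoint toC (k : nat) (L : seq nat) : seq (nat * nat) * nat :=
  if k is k'.+1 then
    if 0 < head 0 L then
      let pz := toC k' (peel L) in
      ((head 0 L - 1 - head 0 (peel L), count (pred1 0) L) :: pz.1, pz.2)
    else ([::], size L)
  else ([::], size L).

Lemma map_predS l : map predn (map S l) = l.
Proof. by elim: l => //= a l ->. Qed.

Lemma filter_mapS l : filter (fun x => 0 < x) (map S l) = map S l.
Proof. by elim: l => //= a l ->. Qed.

Lemma filter_nseq0 y : filter (fun x => 0 < x) (nseq y 0) = [::].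
Proof. by elim: y. Qed.

Lemma peel_fromC d y p z : peel (fromC ((d, y) :: p) z) = fromC p z.
Proof. by rewrite fromC_cons /peel /= filter_cat filter_mapS filter_nseq0 cats0 map_predS. Qed.

Lemma toC_fromC p z k : size (fromC p z) <= k -> toC k (fromC p z) = (p, z).
Proof.
elim: p z k => [|[d y] p IH] z k.
  case: k => [|k] /=; rewrite size_nseq; first by move=> H; have -> : z = 0 by lia.
  by case: z.
rewrite {1}fromC_cons /= => Hk.
case: k Hk => [|k] //= Hk.
rewrite peel_fromC IH; last first.
  by move: Hk; rewrite size_cat size_map; lia.
have -> : d + 1 + head 0 (fromC p z) - 1 - head 0 (fromC p z) = d by lia.
have -> : 0 < d + 1 + head 0 (fromC p z) by lia.
rewrite count_cat count_nseq /= mul1n.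
have -> : count (pred1 0) (map S (fromC p z)) = 0.
  by rewrite count_map; apply/eqP; rewrite -leqn0 leqNgt -has_count; apply/hasP => [[x]].
have -> : (d + 1 + head 0 (fromC p z) == 0) = false by lia.
done.
Qed.

Lemma sgeq_split l : sorted geq l ->
  l = filter (fun x => 0 < x) l ++ nseq (count (pred1 0) l) 0.
Proof.
elim: l => [|a l IH] // H.
have Hl : sorted geq l by move: H; rewrite sgeq_cons => /andP [].
case: a H => [|a] H /=.
  have Hz : all (fun x => x <= 0) l by move: H; rewrite sgeq_cons => /andP [].
  have Hf : filter (fun x => 0 < x) l = [::].
    by apply/eqP; rewrite -size_eq0 size_filter -leqn0 leqNgt -has_count;
       apply/hasP => [[x Hx]]; move/allP: Hz => /(_ x Hx); lia.
  by rewrite {1}(IH Hl) Hf /= add0n.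
by rewrite {1}(IH Hl) add0n.
Qed.

Lemma sorted_peel L : sorted geq L -> sorted geq (peel L).
Proof.
case: L => [|h L] //; rewrite sgeq_cons /peel /= => /andP [_ H].
rewrite sorted_map.
have : sorted geq (filter (fun x => 0 < x) L).
  exact: (sorted_filter geq_trans').
apply: sub_sorted => a b /=; lia.
Qed.

Lemma peel_le L : sorted geq L -> all (fun x => x <= (head 0 L).-1) (peel L).
Proof.
case: L => [|h L] //; rewrite sgeq_cons /peel /= => /andP [H _].
apply/allP => x /mapP [u]; rewrite mem_filter => /andP [_ Hu] ->.
move/allP: H => /(_ u Hu); lia.
Qed.

Lemma head_le (c : nat) l : all (fun x => x <= c) l -> head 0 l <= c.
Proof. by case: l => //= a l /andP []. Qed.

Lemma size_peel L : size (peel L) <= (size L).-1.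
Proof. by rewrite /peel size_map size_filter; case: L => //= a L; rewrite count_size. Qed.

Lemma fromC_toC k L : size L <= k -> sorted geq L ->
  fromC (toC k L).1 (toC k L).2 = L.
Proof.
elim: k L => [|k IH] L Hk HL /=.
  by case: L Hk HL.
case: ifP => Hh; last first.
  rewrite /=; symmetry; apply/all_pred1P/allP => x Hx.
  move/allP: (sgeq_head HL) => /(_ x Hx); move/negbT: Hh => /=; lia.
have Hp : size (peel L) <= k by move: (size_peel L); lia.
move: (IH _ Hp (sorted_peel HL)).
case: (toC k (peel L)) => p z /= E.
rewrite E.
case: L Hk HL Hh E Hp => [|h L] // Hk HL Hh E Hp.
have Hle := head_le (peel_le HL).
have HL' : sorted geq L by move: HL; rewrite sgeq_cons => /andP [].
rewrite [head 0 (h :: L)]/= in Hh Hle *.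
have -> : h - 1 - head 0 (peel (h :: L)) + 1 + head 0 (peel (h :: L)) = h by lia.
congr (_ :: _).
have -> : count (pred1 0) (h :: L) = count (pred1 0) L.
  by rewrite /=; case: h Hh {Hle E HL Hk Hp}.
rewrite {3}(sgeq_split HL') /peel /= map_comp.
congr (_ ++ _).
elim: L {Hk HL Hp E HL' Hle} => //= a L IHL; case: ifP => //= Ha; rewrite IHL; congr (_ :: _); lia.
Qed.

Lemma countge_fromC p z t : (t <= count (fun x => t <= x) (fromC p z)) = (t <= size p).
Proof.
elim: p z t => [|[d y] p IH] z t.
  by rewrite /= count_nseq; case: t.
case: t => [|t]; first by rewrite !leq0n.
rewrite fromC_cons /= count_cat count_map count_nseq /= mul0n addn0.
have -> : count (preim S (fun x => t < x)) (fromC p z) = count (fun x => t <= x) (fromC p z).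
  by apply: eq_count => x.
have Hh := head_fromC p z.
move: (IH z t); case: (leqP t (size p)) => Ht E.
  have -> : t < d + 1 + head 0 (fromC p z) by lia.
  by rewrite add1n ltnS E.
move: E => /negbT; rewrite -ltnNge ltnS => E.
have -> : (t <= size p) = false by lia.
by case: (t < d + 1 + _) => /=; lia.
Qed.

Lemma countge_size_fromC p z : count (fun x => size p <= x) (fromC p z) = size p + z.
Proof.
elim: p z => [|[d y] p IH] z.
  by rewrite /= count_nseq /= mul1n.
rewrite fromC_cons /= count_cat count_map count_nseq /= mul0n addn0.
have -> : count (preim S (fun x => size p < x)) (fromC p z) = count (fun x => size p <= x) (fromC p z).
  by apply: eq_count => x.
rewrite IH head_fromC.
have -> : size p < d + 1 + (sumx p + size p) by lia.
by rewrite add1n.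
Qed.

Definition topz (t : seq (nat * nat) * nat) : nat :=
  if t.1 is (d, y) :: _ then y else t.2.
Definition addtop (k : nat) (t : seq (nat * nat) * nat) : seq (nat * nat) * nat :=
  if t.1 is (d, y) :: p then ((d, y + k) :: p, t.2) else ([::], t.2 + k).
Definition subtop (k : nat) (t : seq (nat * nat) * nat) : seq (nat * nat) * nat :=
  if t.1 is (d, y) :: p then ((d, y - k) :: p, t.2) else ([::], t.2 - k).
Definition fromC' (t : seq (nat * nat) * nat) := fromC t.1 t.2.

Lemma fromC_addtop k t : fromC' (addtop k t) = fromC' t ++ nseq k 0.
Proof.
case: t => [[|[d y] p] z]; rewrite /fromC' /=; first by rewrite nseqD.
by rewrite nseqD catA.
Qed.

Lemma size_addtop k t : size (addtop k t).1 = size t.1.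
Proof. by case: t => [[|[d y] p] z]. Qed.
Lemma size_subtop k t : size (subtop k t).1 = size t.1.
Proof. by case: t => [[|[d y] p] z]. Qed.
Lemma topz_addtop k t : topz (addtop k t) = topz t + k.
Proof. by case: t => [[|[d y] p] z]. Qed.
Lemma topz_subtop k t : topz (subtop k t) = topz t - k.
Proof. by case: t => [[|[d y] p] z]. Qed.
Lemma subtop_addtop k t : subtop k (addtop k t) = t.
Proof. by case: t => [[|[d y] p] z]; rewrite /subtop /addtop /= addnK. Qed.
Lemma addtop_subtop k t : k <= topz t -> addtop k (subtop k t) = t.
Proof. by case: t => [[|[d y] p] z]; rewrite /subtop /addtop /topz /= => H; rewrite subnK. Qed.
Lemma count0_fromC' t : count (pred1 0) (fromC' t) = topz t.
Proof. by case: t => [[|[d y] p] z]; rewrite /fromC' count0_fromC. Qed.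
Lemma subtop_snd k t : t.1 != [::] -> (subtop k t).2 = t.2.
Proof. by case: t => [[|[d y] p] z]. Qed.

Lemma pair_ind (P : seq nat -> Prop) :
  P [::] -> (forall a, P [:: a]) -> (forall a b s, P s -> P (a :: b :: s)) -> forall s, P s.
Proof.
move=> H0 H1 H2 s; move: {2}(size s) (leqnn (size s)) => n; elim: n s => [|n IH] s.
  by case: s.
case: s => [|a [|b s]] //= Hs; apply: H2; apply: IH; move: Hs => /=; lia.
Qed.

Fixpoint fromD (p : seq (nat * nat)) (z : nat) : seq nat :=
  match p with
  | [::] => [:: z.+1]
  | (x, y) :: p' => let s := fromD p' z in
      (head 0 s + x + y + 2) :: (head 0 s + x + 1) :: s
  end.

Lemma fromD_cons x y p z : fromD ((x, y) :: p) z =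
  (head 0 (fromD p z) + x + y + 2) :: (head 0 (fromD p z) + x + 1) :: fromD p z.
Proof. by []. Qed.

Fixpoint toD (s : seq nat) : seq (nat * nat) * nat :=
  match s with
  | a :: b :: s' => let t := toD s' in ((b - head 0 s' - 1, a - b - 1) :: t.1, t.2)
  | [:: a] => ([::], a.-1)
  | [::] => ([::], 0)
  end.

Definition fromD' (t : seq (nat * nat) * nat) := fromD t.1 t.2.

Lemma head_fromD p z : head 0 (fromD p z) = z + 1 + sumx p + sumy p + 2 * size p.
Proof.
elim: p => [|[x y] p IH]; first by rewrite /= sumx_nil sumy_nil; lia.
rewrite fromD_cons [head _ _]/= IH sumx_cons sumy_cons /=; lia.
Qed.

Lemma size_fromD p z : size (fromD p z) = (size p).*2.+1.
Proof. by elim: p => [|[x y] p IH] //=; rewrite IH doubleS. Qed.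

Lemma fromD_ne p z : fromD p z = head 0 (fromD p z) :: behead (fromD p z).
Proof. by case: p => [|[x y] p]. Qed.

Lemma dist_fromD p z : is_distinct_partition (fromD p z).
Proof.
rewrite /is_distinct_partition.
elim: p => [|[x y] p IH] //=.
case/andP: IH; rewrite (fromD_ne p z) /= => H1 ->.
rewrite andbT; apply/and3P; split => //; lia.
Qed.

Lemma toD_fromD p z : toD (fromD p z) = (p, z).
Proof.
elim: p => [|[x y] p IH] //.
rewrite fromD_cons /= IH /=; congr ((_, _) :: _, _); lia.
Qed.

Lemma dist_cons2 a b s : is_distinct_partition (a :: b :: s) =
  [&& b < a, 0 < b, (if s is c :: _ then c < b else true) & is_distinct_partition s].
Proof.
rewrite /is_distinct_partition /=; case: s => [|c s] /=;
  case Hab: (b < a); case Hb: (0 < b); case Ha: (0 < a); rewrite /= ?andbT ?andbF //; try lia.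
all: case Hc: (c < b); case Hc0: (0 < c); rewrite /= ?andbT ?andbF //; lia.
Qed.

Lemma fromD_toD s : is_distinct_partition s -> odd (size s) -> fromD' (toD s) = s.
Proof.
elim/pair_ind: s => [|a|a b s IH] //.
  by case: a => [|a] //; rewrite /is_distinct_partition /= andbT.
rewrite dist_cons2 /= negbK => /and4P [Hab Hb Hc Hs] Ho.
have := IH Hs Ho; rewrite /fromD' /= => ->.
case: s Hc Hs Ho {IH} => [|c s] //= Hc _ _; congr (_ :: _ :: _); lia.
Qed.

Lemma oddsum_fromD p z :
  oddsum (fromD p z) = sumn (fromC p z) + size (fromC p z) + size p + 1.
Proof.
elim: p => [|[x y] p IH].
  by rewrite /= size_nseq sumn_nseq0; lia.
rewrite fromD_cons fromC_cons [oddsum _]/= IH [sumn _]/= [size (_ :: _)]/=.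
have -> : forall a l, sumn (a :: l) = a + sumn l by [].
rewrite sumn_cat sumn_mapS sumn_nseq0 size_cat size_map size_nseq head_fromD head_fromC size_fromC /=; lia.
Qed.

Lemma last_fromD p z : last 0 (fromD p z) = z.+1.
Proof.
elim: p => [|[x y] p IH] //.
by move: IH; rewrite fromD_cons /= (fromD_ne p z) /=.
Qed.

Definition toC' (L : seq nat) := toC (size L) L.

Lemma toC'_fromC t : toC' (fromC' t) = t.
Proof. by case: t => p z; rewrite /toC' /fromC' toC_fromC. Qed.

Lemma fromC_toC' L : sorted geq L -> fromC' (toC' L) = L.
Proof. by move=> H; rewrite /fromC' /toC' fromC_toC. Qed.

Lemma sorted_fromC' t : sorted geq (fromC' t).
Proof. exact: sorted_fromC. Qed.

Lemma oddsum_fromD' t :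
  oddsum (fromD' t) = sumn (fromC' t) + size (fromC' t) + size t.1 + 1.
Proof. exact: oddsum_fromD. Qed.

Lemma countge_fromC' t k : (k <= count (fun x => k <= x) (fromC' t)) = (k <= size t.1).
Proof. exact: countge_fromC. Qed.

Lemma countge_fromC_nseq t j k : 0 < k ->
  count (fun x => k <= x) (fromC' t ++ nseq j 0) = count (fun x => k <= x) (fromC' t).
Proof. by move=> Hk; rewrite count_cat count_nseq leqn0 (gtn_eqF Hk) mul0n addn0. Qed.

Lemma omega_mapS L : omega (map S L) = count (pred1 0) L.
Proof. by rewrite /omega count_map; apply: eq_count => x. Qed.

Lemma countgt_mapS w L : count (fun x => w < x) (map S L) = count (fun x => w <= x) L.
Proof. by rewrite count_map; apply: eq_count => x. Qed.

Lemma crank_le_m1 L : (crank (map S L) <= -1)%R =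
  (0 < count (pred1 0) L) && (count (fun x => count (pred1 0) L <= x) L < count (pred1 0) L).
Proof.
rewrite /crank omega_mapS countgt_mapS.
case: ifP => /eqP H; first by rewrite H.
have -> : 0 < count (pred1 0) L by lia.
rewrite /=; set a := count _ L; set b := count _ L.
apply/idP/idP; lia.
Qed.

Lemma largest_mapS L : largest (map S L) = 0 -> L = [::].
Proof. case: L => // a L; rewrite /largest /= => H; have := leq_maxl a.+1 (foldr maxn 0 (map S L)); by rewrite H. Qed.

Lemma crank_eq0 L : (crank (map S L) == 0%R) =
  if count (pred1 0) L == 0 then L == [::]
  else count (fun x => count (pred1 0) L <= x) L == count (pred1 0) L.
Proof.
rewrite /crank omega_mapS countgt_mapS.
case: ifP => /eqP H.
  apply/idP/idP; last by move/eqP ->.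
  by move/eqP => [] /largest_mapS ->.
set a := count _ L; set b := count _ L.
apply/idP/idP; lia.
Qed.

Lemma is_partition_mapS L : is_partition (map S L) = sorted geq L.
Proof.
rewrite /is_partition sgeq_mapS.
have -> : all (fun x => 0 < x) (map S L) by elim: L.
by rewrite andbT.
Qed.

Lemma mapS_pred L : all (fun x => 0 < x) L -> map S (map predn L) = L.
Proof. by elim: L => //= a L IH /andP [Ha /IH ->]; case: a Ha. Qed.

Lemma sorted_pred L : sorted geq L -> sorted geq (map predn L).
Proof. by move=> H; rewrite sorted_map; apply: sub_sorted H => a b /=; lia. Qed.

Lemma sumn_mapS' L : sumn (map S L) = sumn L + size L.
Proof. exact: sumn_mapS. Qed.

Lemma part_in_bseqs n s : is_partition s -> sumn s = n -> s \in bseqs n.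
Proof.
rewrite /is_partition mem_bseqs => /andP [_ Hp] <-.
apply/andP; split.
  by elim: s Hp => //= a s IH /andP [Ha /IH]; lia.
apply/allP => x Hx; elim: s Hx {Hp} => //= a s IH; rewrite in_cons => /orP [/eqP ->|/IH]; lia.
Qed.

Lemma dist_size s : is_distinct_partition s -> size s <= head 0 s.
Proof.
elim/pair_ind: s => [|a|a b s IH] //.
  by rewrite /is_distinct_partition /= andbT.
rewrite dist_cons2 => /and4P [Hab Hb Hc Hs].
have := IH Hs; case: s Hc {IH Hs} => [|c s] /= Hc; lia.
Qed.

Lemma dist_all s : is_distinct_partition s -> all (fun x => x <= head 0 s) s.
Proof.
case: s => [|a s] // /andP [H _].
have : sorted geq (a :: s) by apply: sub_sorted H => u v /=; lia.
move/sgeq_head => //.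
Qed.

Lemma oddsum_head s : head 0 s <= oddsum s.
Proof. by case: s => [|a [|b s]] //=; lia. Qed.

Lemma dist_in_bseqs n s : is_distinct_partition s -> oddsum s = n -> s \in bseqs n.
Proof.
move=> H <-; rewrite mem_bseqs; apply/andP; split.
  by have := dist_size H; have := oddsum_head s => H1 H2; exact: leq_trans H2 H1.
apply/allP => x Hx; move/allP: (dist_all H) => /(_ x Hx) H1; exact: leq_trans H1 (oddsum_head s).
Qed.

Definition F1 (pi : seq nat) : seq nat :=
  let t := toC' (map predn pi) in fromD' (subtop (size t.1).+1 t).
Definition G1 (s : seq nat) : seq nat :=
  let t := toD s in map S (fromC' (addtop (size t.1).+1 t)).

Lemma toD_fromD' t : toD (fromD' t) = t.
Proof. by case: t => p z; rewrite /fromD' toD_fromD. Qed.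

Lemma sumn_cat_nseq0 l k : sumn (l ++ nseq k 0) = sumn l.
Proof. by rewrite sumn_cat sumn_nseq0 addn0. Qed.

Lemma part1 n : coeff_Do_O n = coeff_crank_le_m1 n.
Proof.
rewrite /coeff_Do_O /coeff_crank_le_m1.
apply: (count_bij (f := G1) (g := F1)); try exact: uniq_bseqs.
- by move=> s /andP [/andP [H _] /eqP E]; apply: dist_in_bseqs.
- by move=> s /andP [/andP [H /eqP E] _]; apply: part_in_bseqs.
- move=> s /andP [/andP [Hd Ho] /eqP E].
  have Es : fromD' (toD s) = s by apply: fromD_toD.
  rewrite /G1; set t := toD s; set k := (size t.1).+1.
  rewrite is_partition_mapS sorted_fromC' /= crank_le_m1 sumn_mapS' fromC_addtop
    sumn_cat_nseq0 size_cat size_nseq.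
  rewrite -fromC_addtop count0_fromC' topz_addtop.
  have := countge_fromC' (addtop k t) (topz t + k); rewrite size_addtop => Hc.
  apply/andP; split.
    apply/eqP; rewrite -E -Es oddsum_fromD' -/t /k; lia.
  apply/andP; split; first by rewrite /k; lia.
  by rewrite ltnNge Hc /k; apply/negP; lia.
- move=> pi /andP [/andP [Hp /eqP E] Hc].
  have Hpos : all (fun x => 0 < x) pi by case/andP: Hp.
  have Epi := mapS_pred Hpos.
  set L := map predn pi in Epi.
  have HL : sorted geq L by rewrite -is_partition_mapS Epi.
  rewrite /F1 -/L; set t := toC' L; set k := (size t.1).+1.
  have EL : fromC' t = L by apply: fromC_toC'.
  rewrite -Epi crank_le_m1 -EL count0_fromC' in Hc.
  case/andP: Hc => Hw Hc.
  have Hk : k <= topz t.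
    by move: Hc; rewrite ltnNge countge_fromC' /k; lia.
  have Et : fromC' t = fromC' (subtop k t) ++ nseq k 0 by rewrite -fromC_addtop addtop_subtop.
  rewrite dist_fromD /= /nparts size_fromD oddS odd_double /=.
  apply/eqP; rewrite oddsum_fromD' size_subtop -E -Epi sumn_mapS' -/L -EL Et
    sumn_cat_nseq0 size_cat size_nseq /k; lia.
- move=> s /andP [/andP [Hd Ho] /eqP E].
  rewrite /G1 /F1 map_predS toC'_fromC size_addtop subtop_addtop.
  exact: fromD_toD.
- move=> pi /andP [/andP [Hp /eqP E] Hc].
  have Hpos : all (fun x => 0 < x) pi by case/andP: Hp.
  have Epi := mapS_pred Hpos.
  set L := map predn pi in Epi.
  have HL : sorted geq L by rewrite -is_partition_mapS Epi.
  rewrite /F1 /G1 -/L; set t := toC' L; set k := (size t.1).+1.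
  have EL : fromC' t = L by apply: fromC_toC'.
  rewrite -Epi crank_le_m1 -EL count0_fromC' in Hc.
  case/andP: Hc => Hw Hc.
  have Hk : k <= topz t.
    by move: Hc; rewrite ltnNge countge_fromC' /k; lia.
  by rewrite toD_fromD' size_subtop addtop_subtop // EL.
Qed.

Definition droplast (s : seq nat) := if s is a :: s' then belast a s' else [::].

Lemma droplast_rcons s x : droplast (rcons s x) = s.
Proof. by case: s => [|a s] //=; rewrite belast_rcons. Qed.

Lemma rcons_droplast s : s != [::] -> rcons (droplast s) (last 0 s) = s.
Proof. by case: s => [|a s] //= _; rewrite -lastI. Qed.

Lemma oddsum_rcons s x : oddsum (rcons s x) = oddsum s + (if odd (size s) then 0 else x).
Proof.
elim/pair_ind: s => [|a|a b s IH] //=.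
by rewrite IH negbK addnA.
Qed.

Lemma dist_rcons s x : s != [::] ->
  is_distinct_partition (rcons s x) = [&& is_distinct_partition s, x < last 0 s & 0 < x].
Proof.
case: s => [|a s] // _; rewrite /is_distinct_partition rcons_cons /= rcons_path all_rcons /=.
move: (path _ _ _) (x < _) (0 < x) (0 < a) (all _ _) => b1 b2 b3 b4 b5.
by case: b1; case: b2; case: b3; case: b4; case: b5.
Qed.

Lemma count_add3 (T : Type) (a b1 b2 b3 : pred T) (L : seq T) :
  (forall x, (a x : nat) = b1 x + b2 x + b3 x) ->
  count a L = count b1 L + count b2 L + count b3 L.
Proof. move=> H; elim: L => //= x L ->; move: (H x); lia. Qed.

Lemma count_add4 (T : Type) (a b1 b2 b3 b4 : pred T) (L : seq T) :
  (forall x, (a x : nat) = b1 x + b2 x + b3 x + b4 x) ->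
  count a L = count b1 L + count b2 L + count b3 L + count b4 L.
Proof. move=> H; elim: L => //= x L ->; move: (H x); lia. Qed.

Lemma count_add2 (T : Type) (a b1 b2 : pred T) (L : seq T) :
  (forall x, (a x : nat) = b1 x + b2 x) ->
  count a L = count b1 L + count b2 L.
Proof. move=> H; elim: L => //= x L ->; move: (H x); lia. Qed.

Lemma count_single (T : eqType) (L : seq T) (x : T) (Q : pred T) :
  uniq L -> (forall s, Q s -> s = x) -> count Q L = Q x && (x \in L).
Proof.
move=> U H.
have -> : count Q L = count (fun s => (s == x) && Q x) L.
  apply: eq_count => s; apply/idP/idP => [Hs|/andP [/eqP -> //]].
  by have E := H _ Hs; rewrite E in Hs *; rewrite eqxx Hs.
case: (Q x).
  by rewrite (eq_count (a2 := pred1 x)) ?count_uniq_mem // => s; rewrite andbT.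
by rewrite (eq_count (a2 := pred0)) ?count_pred0 // => s; rewrite andbF.
Qed.

Lemma sum_sign (L : seq (seq nat)) (P : pred (seq nat)) :
  (\sum_(s <- L | P s) ((-1) ^+ size s : int))%R =
  (Posz (count (fun s => P s && ~~ odd (size s)) L) - Posz (count (fun s => P s && odd (size s)) L))%R.
Proof.
elim: L => [|x L IH]; first by rewrite big_nil.
rewrite big_cons IH /=; case: (P x) => //=.
rewrite -signr_odd; case: (odd (size x)) => /=; rewrite ?expr0 ?expr1 ?PoszD; lia.
Qed.

Definition PDn n s := is_distinct_partition s && (oddsum s == n).
Definition cEL1 n s := PDn n s && ~~ odd (size s) && (0 < size s) && (last 0 s == 1).
Definition cO2 n s := PDn n s && odd (size s) && (1 < last 0 s).
Definition cE1 n s := PDn n s && ~~ odd (size s) && (1 < last 0 s) && (head 0 s == (nth 0 s 1).+1).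
Definition cE2 n s := PDn n s && ~~ odd (size s) && (1 < last 0 s) && ((nth 0 s 1).+1 < head 0 s).
Definition cO1b n s := PDn n s && odd (size s) && (2 < size s) && (last 0 s == 1).
Definition cE0 n s := PDn n s && ~~ odd (size s) && (s == [::]).
Definition cO1a n s := PDn n s && odd (size s) && (s == [:: 1]).

Lemma PDn_bseqs n s : PDn n s -> s \in bseqs n.
Proof. by case/andP => H /eqP E; apply: dist_in_bseqs. Qed.

Lemma cEL1_rcons n s : cEL1 n (rcons s 1) = cO2 n s.
Proof.
case: s => [|a s]; first by rewrite /cEL1 /cO2 /PDn /= !andbF.
rewrite /cEL1 /cO2 /PDn size_rcons last_rcons eqxx andbT dist_rcons // oddsum_rcons oddS negbK ltn0Sn andbT.
case: (odd (size (a :: s))); rewrite ?addn0 ?andbT ?andbF //.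
by move: (is_distinct_partition _) (1 < last 0 _) (oddsum _ == n) => b1 b2 b3; case: b1; case: b2; case: b3.
Qed.

Lemma last_ge1 s : is_distinct_partition s -> s != [::] -> 0 < last 0 s.
Proof.
case: s => [|a s] // /andP [_ H] _.
have : all (fun x => 0 < x) (a :: s) by [].
by move/allP => /(_ (last a s)) H'; apply: H'; rewrite /= mem_last.
Qed.

Lemma count_EL1_O2 n : count (cEL1 n) (bseqs n) = count (cO2 n) (bseqs n).
Proof.
apply: (count_bij (f := droplast) (g := fun s => rcons s 1)); try exact: uniq_bseqs.
- by move=> s /andP [/andP [/andP [H _] _] _]; apply: PDn_bseqs.
- by move=> s /andP [/andP [H _] _]; apply: PDn_bseqs.
- move=> s H; have Hs : s != [::] by move: H; rewrite /cEL1 => /andP [/andP [_ Hs0] _]; case: s Hs0.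
  have E := rcons_droplast Hs; move: (H); rewrite /cEL1 => /andP [_ /eqP Hl].
  by rewrite Hl in E; rewrite -cEL1_rcons E.
- by move=> s H; rewrite cEL1_rcons.
- move=> s H; have Hs : s != [::] by move: H; rewrite /cEL1 => /andP [/andP [_ Hs0] _]; case: s Hs0.
  have E := rcons_droplast Hs; move: (H); rewrite /cEL1 => /andP [_ /eqP Hl].
  by rewrite Hl in E.
- by move=> s _; rewrite droplast_rcons.
Qed.

Definition inchead (s : seq nat) := if s is a :: s' then a.+1 :: s' else s.
Definition dechead (s : seq nat) := if s is a :: s' then a.-1 :: s' else s.

Lemma cE2_inchead n s : cE2 n (inchead s) = cO1b n (rcons s 1).
Proof.
case: s => [|a [|b s]]; first by rewrite /cE2 /cO1b /PDn /= !andbF.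
  by rewrite /cE2 /cO1b /PDn /= !andbF.
rewrite /cE2 /cO1b /PDn size_rcons last_rcons eqxx andbT [inchead _]/= dist_cons2 dist_rcons //
  dist_cons2 oddsum_rcons.
have -> : oddsum (a :: b :: s) = a + oddsum s by [].
have -> : oddsum (a.+1 :: b :: s) = a.+1 + oddsum s by [].
have -> : last 0 (a :: b :: s) = last b s by [].
have -> : last 0 (a.+1 :: b :: s) = last b s by [].
have -> : head 0 (a.+1 :: b :: s) = a.+1 by [].
have -> : nth 0 (a.+1 :: b :: s) 1 = b by [].
have -> : size (a :: b :: s) = (size s).+2 by [].
have -> : size (a.+1 :: b :: s) = (size s).+2 by [].
rewrite !oddS !negbK.
case: (ltnP b a) => Hab; last first.
  have -> : (b.+1 < a.+1) = false by lia.
  by rewrite andbF.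
have -> : b < a.+1 by lia.
have -> : 2 < (size s).+3 by [].
have -> : b.+1 < a.+1 by [].
case: (odd (size s)); rewrite ?andbT ?andbF ?addn0 //.
have -> : a + oddsum s + 1 = a.+1 + oddsum s by lia.
by move: (0 < b) (if s is c :: _ then c < b else true) (is_distinct_partition s) (1 < last b s) (_ == n) => x1 x2 x3 x4 x5;
  case: x1; case: x2; case: x3; case: x4; case: x5.
Qed.

Lemma count_E2_O1b n : count (cE2 n) (bseqs n) = count (cO1b n) (bseqs n).
Proof.
apply: (count_bij (f := fun s => rcons (dechead s) 1) (g := fun s => inchead (droplast s)));
  try exact: uniq_bseqs.
- by move=> s /andP [/andP [/andP [H _] _] _]; apply: PDn_bseqs.
- by move=> s /andP [/andP [/andP [H _] _] _]; apply: PDn_bseqs.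
- move=> s H; rewrite -cE2_inchead.
  case: s H => [|a s] //; rewrite /cE2 /= => H.
  by case: a H => [|a] //; rewrite andbF.
- move=> s H; have Hs : s != [::] by move: H; rewrite /cO1b => /andP [/andP [_ Hs0] _]; case: s Hs0.
  have E := rcons_droplast Hs; move: (H); rewrite /cO1b => /andP [_ /eqP Hl].
  by rewrite Hl in E; rewrite cE2_inchead E.
- move=> s H; rewrite droplast_rcons.
  case: s H => [|a s] //; rewrite /cE2 /= => H.
  by case: a H => [|a] //; rewrite andbF.
- move=> s H; have Hs : s != [::] by move: H; rewrite /cO1b => /andP [/andP [_ Hs0] _]; case: s Hs0.
  have E := rcons_droplast Hs; move: (H); rewrite /cO1b => /andP [_ /eqP Hl].
  rewrite Hl in E; rewrite -{2}E; congr rcons.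
  by case: (droplast s).
Qed.

Lemma fromD_head_nth t : t.1 != [::] ->
  head 0 (fromD' t) = nth 0 (fromD' t) 1 + topz t + 1.
Proof. by case: t => [[|[x y] p] z] // _; rewrite /fromD' fromD_cons /topz /=; lia. Qed.

Lemma last_fromD' t : last 0 (fromD' t) = t.2.+1.
Proof. exact: last_fromD. Qed.

Lemma size_fromD' t : size (fromD' t) = (size t.1).*2.+1.
Proof. exact: size_fromD. Qed.

Lemma countge_size_fromC' t : count (fun x => size t.1 <= x) (fromC' t) = size t.1 + t.2.
Proof. exact: countge_size_fromC. Qed.

Definition Zp n pi := is_partition pi && (sumn pi == n) && (crank pi == 0%R) && (pi != [::]).

Definition F2 (pi : seq nat) : seq nat :=
  let t := toC' (map predn pi) in droplast (fromD' (subtop (size t.1) t)).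
Definition G2 (s : seq nat) : seq nat :=
  let t := toD (rcons s 1) in map S (fromC' (addtop (size t.1) t)).

Lemma head_rcons2 s x : 1 < size s -> head 0 (rcons s x) = head 0 s.
Proof. by case: s. Qed.
Lemma nth1_rcons2 s x : 1 < size s -> nth 0 (rcons s x) 1 = nth 0 s 1.
Proof. by move=> H; rewrite nth_rcons H. Qed.

Lemma cE1_facts n s : cE1 n s ->
  let s' := rcons s 1 in let t := toD s' in
  [/\ fromD' t = s', t.2 = 0, t.1 != [::], topz t = 0 & oddsum s' = n.+1].
Proof.
rewrite /cE1 /PDn => /andP [/andP [/andP [/andP [Hd /eqP Ho] Hev] Hl] /eqP Hh].
have Hne : s != [::] by case: s Hl {Hd Ho Hev Hh}.
have H2 : 1 < size s by case: s Hne Hev {Hd Ho Hl Hh} => [|a [|b s]].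
have Hd' : is_distinct_partition (rcons s 1) by rewrite dist_rcons // Hd Hl.
have Hod : odd (size (rcons s 1)) by rewrite size_rcons /= Hev.
have E := fromD_toD Hd' Hod.
set t := toD (rcons s 1).
have Hz : t.2 = 0.
  by have := last_fromD' t; rewrite E last_rcons => -[].
have Hne' : t.1 != [::].
  by move: (size_fromD' t); rewrite E size_rcons; case: (t.1) => //= [[]]; lia.
split => //.
  have := fromD_head_nth Hne'; rewrite E head_rcons2 // nth1_rcons2 // Hh; lia.
by rewrite oddsum_rcons (negbTE Hev) Ho addn1.
Qed.

Lemma count_E1_Z n : count (cE1 n) (bseqs n) = count (Zp n) (bseqs n).
Proof.
apply: (count_bij (f := G2) (g := F2)); try exact: uniq_bseqs.
- by move=> s /andP [/andP [/andP [H _] _] _]; apply: PDn_bseqs.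
- by move=> s /andP [/andP [/andP [H /eqP E] _] _]; apply: part_in_bseqs.
- move=> s H; have [E Hz Hne Htop Ho] := cE1_facts H.
  rewrite /G2; set t := toD (rcons s 1) in E Hz Hne Htop *; set k := size t.1.
  have Hk : 0 < k by rewrite /k; case: (t.1) Hne.
  rewrite /Zp is_partition_mapS sorted_fromC' /= sumn_mapS' crank_eq0 fromC_addtop
    sumn_cat_nseq0 size_cat size_nseq.
  rewrite -fromC_addtop count0_fromC' topz_addtop Htop add0n fromC_addtop.
  rewrite countge_fromC_nseq // countge_size_fromC' Hz addn0 eqxx.
  have -> : (k == 0) = false by lia.
  rewrite andbT; apply/andP; split.
    apply/eqP; move: Ho; rewrite -E oddsum_fromD' -/k; lia.
  by rewrite -size_eq0 size_map size_cat size_nseq; lia.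
- move=> pi /andP [/andP [/andP [Hp /eqP E] Hc] Hne].
  have Hpos : all (fun x => 0 < x) pi by case/andP: Hp.
  have Epi := mapS_pred Hpos.
  set L := map predn pi in Epi.
  have HL : sorted geq L by rewrite -is_partition_mapS Epi.
  rewrite /F2 -/L; set t := toC' L; set k := size t.1.
  have Hkdef : k = size t.1 by [].
  have EL : fromC' t = L by apply: fromC_toC'.
  rewrite -Epi crank_eq0 -EL count0_fromC' in Hc.
  have HLne : L != [::] by move: Hne; rewrite -Epi; case: (L).
  case: ifP Hc => Hw Hc; first by move: HLne; rewrite -EL (eqP Hc).
  move/eqP: Hc => Hc.
  have H1 : topz t <= k by rewrite /k -countge_fromC' Hc.
  have H2 : k + t.2 <= topz t.
    have := countge_size_fromC' t; rewrite -Hkdef => <-; rewrite -Hc; apply: sub_count => x /=; lia.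
  have Hk : k = topz t by lia.
  have Hz : t.2 = 0 by lia.
  have Hne' : t.1 != [::] by rewrite -size_eq0 -/k Hk; apply/negbT.
  set t' := subtop k t.
  have Et : fromC' t = fromC' t' ++ nseq k 0 by rewrite -fromC_addtop addtop_subtop // Hk.
  have Hz' : t'.2 = 0 by rewrite /t' subtop_snd.
  have Hne'' : t'.1 != [::] by rewrite -size_eq0 size_subtop; rewrite -size_eq0 in Hne'.
  have Htop' : topz t' = 0 by rewrite topz_subtop Hk subnn.
  have Hs'ne : fromD' t' != [::] by rewrite -size_eq0 size_fromD'.
  have Es := rcons_droplast Hs'ne.
  rewrite last_fromD' Hz' in Es.
  set s := droplast (fromD' t') in Es *.
  have Hsz : size s = (size t'.1).*2 by move: (size_fromD' t'); rewrite -Es size_rcons => -[].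
  have Hsz2 : 1 < size s by rewrite Hsz; case: (t'.1) Hne'' => //= a l _; rewrite doubleS.
  have Hd := dist_fromD t'.1 t'.2; rewrite -/(fromD' t') -Es dist_rcons in Hd; last first.
    by move: Hsz2; case: (s).
  case/and3P: Hd => Hd Hl _.
  rewrite /cE1 /PDn Hd Hl Hsz odd_double /=.
  apply/andP; split.
    apply/eqP; move: (oddsum_fromD' t'); rewrite -Es oddsum_rcons Hsz odd_double.
    rewrite size_subtop -/k; move: E; rewrite -Epi sumn_mapS' -/L -EL Et sumn_cat_nseq0
      size_cat size_nseq; lia.
  have := fromD_head_nth Hne''; rewrite -Es head_rcons2 // nth1_rcons2 // Htop' addn0 addn1.
  by move=> ->.
- move=> s H; have [E Hz Hne Htop Ho] := cE1_facts H.
  rewrite /G2 /F2 map_predS toC'_fromC size_addtop subtop_addtop E.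
  exact: droplast_rcons.
- move=> pi /andP [/andP [/andP [Hp /eqP E] Hc] Hne].
  have Hpos : all (fun x => 0 < x) pi by case/andP: Hp.
  have Epi := mapS_pred Hpos.
  set L := map predn pi in Epi.
  have HL : sorted geq L by rewrite -is_partition_mapS Epi.
  rewrite /F2 /G2 -/L; set t := toC' L; set k := size t.1.
  have Hkdef : k = size t.1 by [].
  have EL : fromC' t = L by apply: fromC_toC'.
  rewrite -Epi crank_eq0 -EL count0_fromC' in Hc.
  have HLne : L != [::] by move: Hne; rewrite -Epi; case: (L).
  case: ifP Hc => Hw Hc; first by move: HLne; rewrite -EL (eqP Hc).
  move/eqP: Hc => Hc.
  have H1 : topz t <= k by rewrite /k -countge_fromC' Hc.
  have H2 : k + t.2 <= topz t.
    have := countge_size_fromC' t; rewrite -Hkdef => <-; rewrite -Hc; apply: sub_count => x /=; lia.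
  have Hk : k = topz t by lia.
  have Hz : t.2 = 0 by lia.
  have Hne' : t.1 != [::] by rewrite -size_eq0 -/k Hk; apply/negbT.
  set t' := subtop k t.
  have Hz' : t'.2 = 0 by rewrite /t' subtop_snd.
  have Hs'ne : fromD' t' != [::] by rewrite -size_eq0 size_fromD'.
  have Es := rcons_droplast Hs'ne.
  rewrite last_fromD' Hz' in Es.
  by rewrite Es toD_fromD' size_subtop -/k addtop_subtop ?Hk // EL.
Qed.

Lemma even_split n s : (PDn n s && ~~ odd (size s) : nat) = cE0 n s + cEL1 n s + cE1 n s + cE2 n s.
Proof.
rewrite /cE0 /cEL1 /cE1 /cE2.
case E: (PDn n s && ~~ odd (size s)) => //.
rewrite !andTb.
case/andP: E => /andP [Hd _] Hev.
case: s Hd Hev => [|a [|b s]] Hd Hev //.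
have Hl := last_ge1 Hd isT.
have Hab : b < a by move: Hd; rewrite dist_cons2 => /andP [].
move: (last 0 _) Hl => l Hl.
rewrite [head _ _]/= [nth _ _ _]/= [size _]/=.
have -> : ([:: a, b & s] == [::]) = false by [].
have -> : (0 < (size s).+2) = true by [].
have [H1|H1] : l = 1 \/ 1 < l by lia.
  by rewrite H1 eqxx.
have -> : (l == 1) = false by apply/negbTE/eqP; lia.
rewrite H1 /=.
have [H2|H2] : a = b.+1 \/ b.+1 < a by lia.
  by rewrite H2 eqxx ltnn.
have -> : (a == b.+1) = false by apply/negbTE/eqP; lia.
by rewrite H2.
Qed.

Lemma odd_split n s : (PDn n s && odd (size s) : nat) = cO2 n s + cO1a n s + cO1b n s.
Proof.
rewrite /cO2 /cO1a /cO1b.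
case E: (PDn n s && odd (size s)) => //.
rewrite !andTb.
case/andP: E => /andP [Hd _] Hod.
case: s Hd Hod => [|a [|b s]] Hd Hod //.
  have Ha : 0 < a by move: Hd; rewrite /is_distinct_partition /= andbT.
  rewrite [last _ _]/=; case: a Ha {Hd Hod} => [|[|a]] //.
have Hl := last_ge1 Hd isT.
move: (last 0 _) Hl => l Hl.
have -> : ([:: a, b & s] == [:: 1]) = false by rewrite eqseq_cons /= andbF.
have -> : 2 < size [:: a, b & s] by case: (s) Hod.
have [H1|H1] : l = 1 \/ 1 < l by lia.
  by rewrite H1 eqxx.
have -> : (l == 1) = false by apply/negbTE/eqP; lia.
by rewrite H1 /=.
Qed.

Lemma count_E0 n : count (cE0 n) (bseqs n) = (n == 0).
Proof.
rewrite (count_single (x := [::])) ?uniq_bseqs; last by move=> s /andP [_ /eqP].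
rewrite /cE0 /PDn mem_bseqs /= andbT.
all: by case: n.
Qed.

Lemma count_O1a n : count (cO1a n) (bseqs n) = (n == 1).
Proof.
rewrite (count_single (x := [:: 1])) ?uniq_bseqs; last by move=> s /andP [_ /eqP].
rewrite /cO1a /PDn mem_bseqs /= andbT.
all: by case: n => [|[|n]].
Qed.

Lemma count_crank0_split n : coeff_crank_eq0 n = (n == 0) + count (Zp n) (bseqs n).
Proof.
rewrite /coeff_crank_eq0.
rewrite (count_add2 (b1 := fun s => is_partition s && (sumn s == n) && (crank s == 0%R) && (s == [::]))
   (b2 := Zp n)); last first.
  by move=> s; rewrite /Zp; case: (s == [::]); rewrite ?andbT ?andbF /= ?addn0.
congr (_ + _).
rewrite (count_single (x := [::])) ?uniq_bseqs; last by move=> s /andP [_ /eqP].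
rewrite mem_bseqs /= andbT.
all: by case: n.
Qed.

Local Open Scope ring_scope.

Theorem theorem15 :
  (forall n : nat, coeff_Do_O n = coeff_crank_le_m1 n) /\
  (forall n : nat,
     coeff_D_signed_O n = - ((n == 1%N)%:R : int) + (coeff_crank_eq0 n)%:Z).
Proof.
split; first exact: part1.
move=> n.
rewrite /coeff_D_signed_O /nparts (sum_sign _ (PDn n)).
rewrite (count_add4 (b1 := cE0 n) (b2 := cEL1 n) (b3 := cE1 n) (b4 := cE2 n)); last exact: even_split.
rewrite (count_add3 (a := fun s => PDn n s && odd (size s)) (b1 := cO2 n) (b2 := cO1a n) (b3 := cO1b n)); last exact: odd_split.
rewrite count_E0 count_O1a count_EL1_O2 count_E2_O1b count_E1_Z count_crank0_split.
rewrite -natz.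
move: (count (cO2 n) _) (count (cO1b n) _) (count (Zp n) _) => a b c.
case: (n == 0); case: (n == 1); rewrite /=; lia.
Qed.
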